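(* Let $k$ be a field and $A$ an integral domain that is a $k$-algebra, equipped with $k$-linear derivations $\delta_1,\ldots,\delta_m$. Suppose there is a finite-dimensional $k$-vector subspace $V$ of $A$ and a set $\mathcal S$ of ideals of $A$ such that (i) $\delta_i(I)\subseteq I$ for all $i=1,\ldots,m$ and all $I\in\mathcal S$; (ii) $\bigcap\mathcal S=(0)$; (iii) $V\cap I\neq(0)$ for all $I\in\mathcal S$. Then there exists $f\in\operatorname{Frac}(A)\setminus k$ with $\delta_i(f)=0$ for all $i=1,\ldots,m$.
   Context: All algebras are commutative. The derivations are extended to $\operatorname{Frac}(A)$ by the quotient rule. *)

(* Defs.v *)
From HB Require Import structures.
From mathcomp Require Import all_boot all_order all_algebra.
From mathcomp Require Import generic_quotient fraction.
Set Implicit Arguments. Unset Strict Implicit. Unset Printing Implicit Defensive.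
Import GRing.Theory.
Local Open Scope ring_scope.

(* A commutative k-algebra structure on the integral domain A is given by the
   structure map phi : k -> A (a ring morphism). *)

Definition is_kderivation (k : fieldType) (A : idomainType)
    (phi : {rmorphism k -> A}) (d : A -> A) : Prop :=
  [/\ forall x y : A, d (x + y) = d x + d y,
      forall (c : k) (x : A), d (phi c * x) = phi c * d x
    & forall x y : A, d (x * y) = d x * y + x * d y].

Definition is_ideal (A : idomainType) (I : A -> Prop) : Prop :=
  [/\ I 0, forall x y, I x -> I y -> I (x + y)
    & forall a x, I x -> I (a * x)].

Definition frac_deriv (A : idomainType) (d : A -> A) (f : {fraction A})
    : {fraction A} :=
  let r := repr f in
  let a := \n_r in let b := \d_r in
  tofrac (d a * b - a * d b) / tofrac (b * b).

Definition in_kspan (k : fieldType) (A : idomainType)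
    (phi : {rmorphism k -> A}) (vs : seq A) (x : A) : Prop :=
  exists cs : seq k, size cs = size vs /\
    x = \sum_(i < size vs) phi (nth 0 cs i) * nth 0 vs i.

(* Main.v *)
Require Import Defs.
From HB Require Import structures.
From mathcomp Require Import all_boot all_order all_algebra.
From mathcomp Require Import generic_quotient fraction.
From mathcomp Require Import ring.
From Stdlib Require Import Classical.
Import GRing.Theory.
Local Open Scope ring_scope.
Local Open Scope quotient_scope.

Lemma frac_repr (A : idomainType) (f : {fraction A}) :
  f * tofrac (\d_(repr f)) = tofrac (\n_(repr f)).
Proof.
rewrite -[f in f * _]reprK. set p := repr f.
rewrite /FracField.tofrac. unlock.
rewrite -[_ * _]FracField.pi_mul.
apply/eqmodP => /=. rewrite FracField.equivfE /FracField.mulf /=.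
rewrite !numden_Ratio ?oner_neq0 ?mulf_neq0 ?denom_ratioP ?oner_neq0 //.
by rewrite !mulr1 mulrC.
Qed.

Section Core.
Variables (k : fieldType) (A : idomainType) (phi : {rmorphism k -> A}).

Lemma der0 d : is_kderivation phi d -> d 0 = 0.
Proof.
case=> Hadd _ _; apply: (addrI (d 0)); by rewrite addr0 -Hadd addr0.
Qed.

Lemma der_sum d (n : nat) (F : 'I_n -> A) : is_kderivation phi d ->
  d (\sum_(i < n) F i) = \sum_(i < n) d (F i).
Proof.
move=> Hd; have [Hadd _ _] := Hd.
apply: (big_rec2 (fun a b => d a = b)); first exact: der0.
by move=> i y1 y2 _ <-; rewrite Hadd.
Qed.

Lemma fd0 d r v0 : is_kderivation phi d -> v0 != 0 ->
  v0 * d r - d v0 * r = 0 -> frac_deriv d (tofrac r / tofrac v0) = 0.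
Proof.
move=> [Hadd Hc Hmul] nv0 HT. rewrite /frac_deriv /=.
set f := tofrac r / tofrac v0.
have := @frac_repr A f. set p := repr f => Hf.
set a := \n_p. set b := \d_p.
have nb : b != 0 := denom_ratioP p.
have Hab : a * v0 = r * b.
  apply/eqP; rewrite -tofrac_eq !tofracM -Hf /f.
  by rewrite mulrAC divfK ?tofrac_eq0.
have e2 : d a * v0 + a * d v0 - (d r * b + r * d b) = 0.
  by rewrite -!Hmul Hab subrr.
have e1 : a * v0 - r * b = 0 by rewrite Hab subrr.
have key : v0 * v0 * (d a * b - a * d b) =
  v0 * b * (d a * v0 + a * d v0 - (d r * b + r * d b))
  - (v0 * d b + b * d v0) * (a * v0 - r * b) + b * b * (v0 * d r - d v0 * r).
  ring.
rewrite e2 e1 HT !mulr0 subrr addr0 in key.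
move/eqP: key; rewrite !mulf_eq0 (negbTE nv0) /= => /eqP ->.
by rewrite rmorph0 mul0r.
Qed.

Lemma span_dec (v0 : A) rest x : in_kspan phi (v0 :: rest) x ->
  exists c0 r, x = phi c0 * v0 + r /\ in_kspan phi rest r.
Proof.
case=> cs [Hs ->]; case: cs Hs => [|c0 cs] //= [Hs].
exists c0, (\sum_(i < size rest) phi (nth 0 cs i) * nth 0 rest i).
split; last by exists cs.
by rewrite big_ord_recl.
Qed.

Variables (m : nat) (delta : 'I_m -> A -> A).
Hypothesis Hder : forall i, is_kderivation phi (delta i).
Hypothesis Hconst : forall r v0 : A, v0 != 0 ->
  (forall i, v0 * delta i r - delta i v0 * r = 0) -> exists e, r = phi e * v0.

Definition T v0 i x := v0 * delta i x - delta i v0 * x.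

Lemma T_span v0 i rest r : in_kspan phi rest r -> in_kspan phi (map (T v0 i) rest) (T v0 i r).
Proof.
case=> cs [Hs ->]; exists cs; rewrite size_map; split => //.
have [Hadd Hc Hmul] := Hder i.
rewrite /T der_sum // !mulr_sumr -sumrB; apply: eq_bigr => j _.
rewrite (nth_map 0) // Hc; ring.
Qed.

Lemma ideal_mul (I : A -> Prop) a x : is_ideal I -> I x -> I (x * a).
Proof. by case=> _ _ H Ix; rewrite mulrC; apply: H. Qed.

Lemma ideal_sub (I : A -> Prop) x y : is_ideal I -> I x -> I y -> I (x - y).
Proof.
move=> HI Ix Iy; have [_ H1 H2] := HI; apply: H1 => //.
by rewrite -mulN1r; apply: H2.
Qed.

Lemma core n : forall vs : seq A, size vs = n -> exists2 d : A, d != 0 &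
  forall I : A -> Prop, is_ideal I -> (forall i x, I x -> I (delta i x)) ->
  forall x, x != 0 -> in_kspan phi vs x -> I x -> I d.
Proof.
elim: n => [|n IH] vs.
  move/size0nil->; exists 1; first exact: oner_neq0.
  move=> I _ _ x nx [cs [_ hx]] _; exfalso; move: nx.
  by rewrite hx big_ord0 eqxx.
case: vs => [|v0 rest] //= [Hs].
have [d' nd' Hd'] := IH rest Hs.
case: (eqVneq v0 0) => [->|nv0].
  exists d' => // I HI Hst x nx /span_dec [c0 [r [Hx Hr]]] Ix.
  apply: (Hd' I HI Hst x nx) => //.
  by rewrite Hx mulr0 add0r.
have: forall i, exists2 D : A, D != 0 & forall I : A -> Prop, is_ideal I ->
    (forall i x, I x -> I (delta i x)) ->
    forall x, x != 0 -> in_kspan phi (map (T v0 i) rest) x -> I x -> I D.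
  by move=> i; apply: IH; rewrite size_map.
case/(fin_all_exists2 (U := fun _ => A)) => D nD HD.
exists (d' * v0 * \prod_(i < m) D i).
  by rewrite !mulf_neq0 //; apply/prodf_neq0 => i _.
move=> I HI Hst x nx /span_dec [c0 [r [Hx Hr]]] Ix.
case: (boolP [exists i, T v0 i r != 0]).
  case/existsP => i Ti.
  have ID : I (D i).
    apply: (HD i I HI Hst (T v0 i r) Ti); first exact: T_span.
    have [Hadd Hc Hmul] := Hder i.
    have -> : T v0 i r = v0 * delta i x - delta i v0 * x.
      by rewrite Hx Hadd Hc /T; ring.
    apply: ideal_sub => //.
      by rewrite mulrC; apply: ideal_mul => //; apply: Hst.
    by rewrite mulrC; apply: ideal_mul.
  rewrite (bigD1 i) //=.
  have -> : d' * v0 * (D i * \prod_(j < m | j != i) D j)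
      = D i * (d' * v0 * \prod_(j < m | j != i) D j) by ring.
  by apply: ideal_mul.
rewrite negb_exists => /forallP H.
have H' : forall i, v0 * delta i r - delta i v0 * r = 0.
  by move=> i; apply/eqP; move: (H i); rewrite negbK.
have [e He] := Hconst r v0 nv0 H'.
have Hx' : x = phi (c0 + e) * v0 by rewrite Hx He rmorphD mulrDl.
have nce : c0 + e != 0.
  by apply: contra nx => /eqP ce; rewrite Hx' ce rmorph0 mul0r.
have Iv0 : I v0.
  have -> : v0 = phi (c0 + e)^-1 * x.
    by rewrite Hx' mulrA -rmorphM mulVf // rmorph1 mul1r.
  by rewrite mulrC; apply: ideal_mul.
have -> : d' * v0 * \prod_(i < m) D i = v0 * (d' * \prod_(i < m) D i) by ring.
exact: ideal_mul.
Qed.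

End Core.

Theorem lemma3p1 (k : fieldType) (A : idomainType) (phi : {rmorphism k -> A})
    (m : nat) (delta : 'I_m -> A -> A)
    (Hder : forall i, is_kderivation phi (delta i))
    (vs : seq A) (S : (A -> Prop) -> Prop)
    (HSideal : forall I, S I -> is_ideal I)
    (Hstable : forall i I, S I -> forall x, I x -> I (delta i x))
    (Hcap : forall x, (forall I, S I -> I x) -> x = 0)
    (HV : forall I, S I -> exists2 x, x != 0 & in_kspan phi vs x /\ I x) :
  exists f : {fraction A},
    (~ exists c : k, f = tofrac (phi c)) /\
    (forall i, frac_deriv (delta i) f = 0).
Proof.
apply: NNPP => Hn.
have Hc : forall r v0 : A, v0 != 0 ->
    (forall i, v0 * delta i r - delta i v0 * r = 0) -> exists e, r = phi e * v0.
  move=> r v0 nv0 HT.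
  have Hf : forall i, frac_deriv (delta i) (tofrac r / tofrac v0) = 0.
    by move=> i; apply: fd0.
  case: (classic (exists c, tofrac r / tofrac v0 = tofrac (phi c))) => [[e he]|hne];
    last by exfalso; apply: Hn; exists (tofrac r / tofrac v0).
  by exists e; apply/eqP; rewrite -tofrac_eq tofracM -he divfK // tofrac_eq0.
have [d nd Hd] := @core k A phi m delta Hder Hc (size vs) vs (erefl _).
move/eqP: nd; apply; apply: Hcap => I SI.
have [x nx [Hx Ix]] := HV I SI.
exact: (Hd I (HSideal I SI) (fun i => Hstable i I SI) x nx Hx Ix).
Qed.
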